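(* Let $Q_{2^n}$ ($n\ge 3$) be the generalized quaternion group of order $2^n$. A non-identity element $g\in Q_{2^n}$ is an isolated vertex of the undeleted difference graph of $Q_{2^n}$ if and only if $g$ has order $2$.
   Context: $Q_{2^n}=\langle x,y\mid x^{2^{n-1}}=1,\ y^2=x^{2^{n-2}},\ y^{-1}xy=x^{-1}\rangle$. For a finite group $G$ with identity $e$: the intersection power graph $\mathcal{G}_I(G)$ has vertex set $G$, two distinct non-identity vertices $x,y$ being adjacent iff $\langle x\rangle\cap\langle y\rangle\neq\{e\}$, and $e$ being adjacent to every other vertex. The power graph $\mathcal{P}(G)$ has vertex set $G$, two distinct vertices being adjacent iff one is a power of the other. The undeleted difference graph of $G$ has vertex set $G$ and edge set $E(\mathcal{G}_I(G))\setminus E(\mathcal{P}(G))$. *)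

(* Defs.v *)
From mathcomp Require Import all_boot all_fingroup all_solvable.
Set Implicit Arguments. Unset Strict Implicit. Unset Printing Implicit Defensive.
Local Open Scope group_scope.

Definition int_pow_adj (gT : finGroupType) (x y : gT) : bool :=
  (x != y) && [|| x == 1, y == 1 | <[x]> :&: <[y]> != 1].

Definition pow_adj (gT : finGroupType) (x y : gT) : bool :=
  (x != y) && ((x \in <[y]>) || (y \in <[x]>)).

Definition diff_adj (gT : finGroupType) (x y : gT) : bool :=
  int_pow_adj x y && ~~ pow_adj x y.

Definition diff_isolated (gT : finGroupType) (g : gT) : Prop :=
  forall h : gT, ~~ diff_adj g h.

(* Main.v *)
Require Import Defs.
From mathcomp Require Import all_boot all_fingroup all_solvable.
Local Open Scope group_scope.

Lemma cyc_swap (gT : finGroupType) (a b : gT) :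
  a \in <[b]> -> #[b] <= #[a] -> b \in <[a]>.
Proof.
move=> ab le.
have sub : <[a]> \subset <[b]> by rewrite cycle_subG.
have -> : <[a]> = <[b]>.
  apply/eqP; rewrite eqEcard sub /= -!orderE //.
exact: cycle_id.
Qed.

Theorem lemma5p3 (n : nat) (hn : 3 <= n) (g : 'Q_(2 ^ n)) (hg : g != 1) :
  diff_isolated g <-> #[g] = 2.
Proof.
have isoG : [set: 'Q_(2 ^ n)] \isog [set: 'Q_(2 ^ n)] := isog_refl _.
have [[x y] genG [oy y2 xy]] := generators_quaternion hn isoG.
have [[_ oX _] _ [_ _ uniq2 _ _] _ _] := quaternion_structure hn genG isoG.
have [cardQ _ ox /setDP [_ nyx]] := genG.
set z := x ^+ (2 ^ n.-2) in uniq2.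
have zin : forall h : 'Q_(2 ^ n), h != 1 -> z \in <[h]>.
  move=> h h1.
  have : #[h] %| 2 ^ n by rewrite -[X in _ %| X]cardQ order_dvdG ?inE.
  case/(dvdn_pfactor _ _ (isT : prime 2)) => k _ ok.
  have k0 : 0 < k.
    case: k ok => // ok; move: h1; rewrite -order_eq1 ok; by [].
  have ->: z = h ^+ (2 ^ k.-1).
    symmetry; apply: uniq2; first by rewrite inE.
    rewrite orderXdiv ok; last by rewrite dvdn_Pexp2l // leq_pred.
    by rewrite -(prednK k0) expnS mulnK ?expn_gt0.
  exact: mem_cycle.
have e : (2 ^ n.-1 = 2 * 2 ^ n.-2)%N.
  by rewrite -expnS; congr (expn 2 _); by case: (n) hn => [|[|[|k]]].
have oz : #[z] = 2 by rewrite orderXdiv ox e ?dvdn_mull // mulnK ?expn_gt0.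
have z1 : z != 1 by rewrite -order_eq1 oz.
have adjI : forall a b : 'Q_(2 ^ n), a != 1 -> b != 1 -> <[a]> :&: <[b]> != 1.
  move=> a b a1 b1; apply/negP => /eqP E.
  have : z \in <[a]> :&: <[b]> by rewrite inE !zin.
  by rewrite E inE (negbTE z1).
split; last first.
  move=> og h; have gz : g = z by apply: uniq2; rewrite ?inE.
  rewrite /diff_adj /pow_adj negb_and negbK.
  case: (eqVneq g h) => [->|ngh]; first by rewrite /int_pow_adj eqxx.
  apply/orP; right; rewrite andTb.
  case: (eqVneq h 1) => [->|h1]; first by rewrite group1 orbT.
  by rewrite gz zin.
move=> iso; apply/eqP/negPn/negP => og2.
have og4 : 4 <= #[g].
  have : #[g] %| 2 ^ n by rewrite -[X in _ %| X]cardQ order_dvdG ?inE.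
  case/(dvdn_pfactor _ _ (isT : prime 2)) => k _ ok.
  move: og2 hg; rewrite -order_eq1 ok.
  by case: k {ok} => [|[|k]] //= _ _; rewrite !expnS mulnA leq_pmulr ?expn_gt0.
have key : forall h, h != 1 -> g \notin <[h]> -> h \notin <[g]> -> False.
  move=> h h1 gh hg'; apply/negP: (iso h).
  rewrite /diff_adj /int_pow_adj /pow_adj adjI // !orbT andbT.
  have ngh : g != h by apply: contra gh => /eqP ->; rewrite cycle_id.
  by rewrite ngh /= negb_or gh hg'.
case: (boolP (g \in <[x]>)) => gx.
  have y1 : y != 1 by apply: contra nyx => /eqP ->; rewrite group1.
  have sgx : <[g]> \subset <[x]> by rewrite cycle_subG.
  apply: (key y y1).
    apply/negP => gy.
    have yg : y \in <[g]> by apply: cyc_swap; rewrite // oy.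
    by rewrite (subsetP sgx) in nyx.
  apply/negP => yg.
  by rewrite (subsetP sgx) in nyx.
have x1 : x != 1 by rewrite -order_eq1 ox -(expn0 2) eqn_exp2l //; case: (n) hn => [|[|k]].
apply: (key x x1) => //.
apply/negP => xg; apply: (negP gx); apply: cyc_swap => //.
rewrite (oX g) ?inE ?gx //; apply: leq_trans _ (eq_leq (esym ox)); rewrite e -{1}(muln1 2) -[4]/(2 * 2)%N leq_mul2l /=.
by rewrite -{1}(expn0 2) ltn_exp2l //; case: (n) hn => [|[|[|k]]].
Qed.
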